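(* Let $n,m$ be positive integers with $m>1$. (a) $\nu(n)=\nu(n,m)=\lceil n/2\rceil$. (b) If $n\ge m$, then $\nu^*(n,m)=\nu(n,m)+1$ if $n$ is even and $m$ is odd, and $\nu^*(n,m)=\nu(n,m)$ otherwise. In particular, $\nu^*(n,2)=\nu^*(n)=\nu(n)$ for all $n>1$.
   Context: Let $\mathbb F_2=\{0,1\}$ be the field with two elements. For $u\in\mathbb F_2^n$, $|u|$ denotes the Hamming weight of $u$. A wiring on $n$ vertices is a matrix $W=(w_{i,j})\in M(n,n;\mathbb F_2)$ with $w_{i,i}=1$ for all $i$. The degree of vertex $j$ is the number of $1$s in the $j$th column of $W$, and $\deg(W)$ is the maximum degree over all vertices. For $c\in\mathbb F_2^n$, $M(W,c)=\max\{|Wx+c| : x\in\mathbb F_2^n\}$. For $n,m\ge1$, $A(n,m)$ is the set of wirings on $n$ vertices with $\deg(W)\le m$; for $n\ge m$, $A^*(n,m)$ is the set of wirings on $n$ vertices in which every vertex has degree exactly $m$. Define $\nu(n,m)=\min\{M(W,c): W\in A(n,m),\ c\in\mathbb F_2^n\}$, for $n\ge m$ $\nu^*(n,m)=\min\{M(W,c): W\in A^*(n,m),\ c\in\mathbb F_2^n\}$, and $\nu(n)=\nu(n,n)$, $\nu^*(n)=\nu^*(n,n)$. *)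

(* Defs.v *)
From mathcomp Require Import all_boot all_algebra.
Set Implicit Arguments. Unset Strict Implicit. Unset Printing Implicit Defensive.
Import GRing.Theory.
Local Open Scope ring_scope.

Definition hweight (n : nat) (u : 'cV['F_2]_n) : nat :=
  #|[set i : 'I_n | u i ord0 != 0]|.

Definition is_wiring (n : nat) (W : 'M['F_2]_n) : bool :=
  [forall i : 'I_n, W i i == 1].

Definition vdeg (n : nat) (W : 'M['F_2]_n) (j : 'I_n) : nat :=
  #|[set i : 'I_n | W i j != 0]|.

Definition wdeg (n : nat) (W : 'M['F_2]_n) : nat :=
  (\max_(j : 'I_n) vdeg W j)%N.

Definition Mval (n : nat) (W : 'M['F_2]_n) (c : 'cV['F_2]_n) : nat :=
  (\max_(x : 'cV['F_2]_n) hweight (W *m x + c))%N.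

Definition Aset (n m : nat) : pred 'M['F_2]_n :=
  fun W => is_wiring W && (wdeg W <= m)%N.

Definition Astar (n m : nat) : pred 'M['F_2]_n :=
  fun W => is_wiring W && [forall j : 'I_n, (vdeg W j == m)%N].

(* Since M(W,c) <= n
   always, the default value n of the iterated minimum is harmless whenever
   the class is nonempty (which is the case in all uses below). *)
Definition numin (n : nat) (P : pred 'M['F_2]_n) : nat :=
  (\big[minn/n]_(W : 'M['F_2]_n | P W) \big[minn/n]_(c : 'cV['F_2]_n) Mval W c)%N.

Definition nu (n m : nat) : nat := @numin n (@Aset n m).
Definition nustar (n m : nat) : nat := @numin n (@Astar n m).
Definition nu1 (n : nat) : nat := nu n n.
Definition nustar1 (n : nat) : nat := nustar n n.

(* Main.v *)
Require Import Defs.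
From mathcomp Require Import all_boot all_algebra.
From mathcomp Require Import zify.
Set Implicit Arguments. Unset Strict Implicit. Unset Printing Implicit Defensive.
Import GRing.Theory.
Local Open Scope ring_scope.

Lemma F2_cases (a : 'F_2) : a = 0 \/ a = 1.
Proof. case: a => [[|[|]]] //= H; [left|right]; apply/val_inj => //. Qed.

Lemma F2_addxx (a : 'F_2) : a + a = 0.
Proof. case: (F2_cases a) => ->; first by rewrite addr0. by apply/val_inj. Qed.

Lemma F2_natb (b : bool) : ((b%:R : 'F_2) != 0) = b.
Proof. by case: b. Qed.

Lemma F2_neq0 (a : 'F_2) : (a != 0) = (a == 1).
Proof. case: (F2_cases a) => ->; first by rewrite eqxx eq_sym oner_eq0. by rewrite oner_eq0 eqxx. Qed.

Lemma card_iota n (p : pred nat) : #|[set i : 'I_n | p i]| = count p (iota 0 n).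
Proof.
by rewrite -sum1dep_card -(@big_mkord nat 0%N addn n p (fun _ => 1%N)) sum1_count /index_iota subn0.
Qed.

Lemma count_interval a b N : (count (fun i => (a <= i < b)%N) (iota 0 N) = minn b N - minn a N)%N.
Proof.
elim: N => [|N IH]; first by rewrite /= !minn0.
rewrite -addn1 iotaD count_cat IH /= addn0.
case: (leqP a N) => Ha; case: (ltnP N b) => Hb /=; lia.
Qed.

Lemma hweight_sum n (u : 'cV['F_2]_n) : hweight u = (\sum_i nat_of_bool (u i ord0 != 0%R))%N.
Proof.
rewrite /hweight -sum1dep_card big_mkcond /=.
by apply: eq_bigr => i _; case: (u i ord0 != 0).
Qed.

Lemma hweight_F2 n (u : 'cV['F_2]_n) : ((hweight u)%:R : 'F_2) = \sum_i u i ord0.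
Proof.
rewrite hweight_sum natr_sum; apply: eq_bigr => i _.
by case: (F2_cases (u i ord0)) => ->.
Qed.

Lemma F2_nat_odd k : ((k%:R : 'F_2) == 0) = ~~ odd k.
Proof.
rewrite -(Fp_nat_mod (p:=2)) // modn2; by case: (odd k).
Qed.

Lemma Wdelta n (W : 'M['F_2]_n) (j i : 'I_n) : (W *m (delta_mx j (ord0 : 'I_1) : 'cV_n)) i ord0 = W i j.
Proof. by rewrite -colE mxE. Qed.

Lemma flip_card n (W : 'M['F_2]_n) (c : 'cV['F_2]_n) (i : 'I_n) : W i i = 1 ->
  (#|[set x : 'cV['F_2]_n | (W *m x + c) i ord0 != 0]|).*2 = #|'cV['F_2]_n|.
Proof.
move=> Wii.
set A := [set x : 'cV['F_2]_n | (W *m x + c) i ord0 != 0].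
have e x : (W *m (x + delta_mx i ord0) + c) i ord0 = (W *m x + c) i ord0 + 1.
  by rewrite mulmxDr addrAC [LHS]mxE Wdelta Wii.
have hC : #|~: A| = #|A|.
  have -> : ~: A = (fun x => x + delta_mx i ord0) @^-1: A.
  apply/setP => x; rewrite !inE e.
  by case: (F2_cases ((W *m x + c) i ord0)) => ->; rewrite ?add0r ?eqxx ?oner_eq0 //; rewrite (F2_addxx 1) eqxx.
  by rewrite card_preimset //; exact: addIr.
by move: (cardsC A); rewrite hC addnn.
Qed.

Lemma sum_boolcard (T : finType) (P : pred T) :
  (\sum_x nat_of_bool (P x))%N = #|[set x | P x]|.
Proof. by rewrite -sum1dep_card [RHS]big_mkcond; apply: eq_bigr => x _; case: (P x). Qed.

Lemma sum_hw n (W : 'M['F_2]_n) (c : 'cV['F_2]_n) : is_wiring W ->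
  ((\sum_x hweight (W *m x + c)).*2 = n * #|'cV['F_2]_n|)%N.
Proof.
move/forallP=> Hw.
under eq_bigr do rewrite hweight_sum.
rewrite exchange_big /= -muln2 big_distrl /=.
under eq_bigr do rewrite sum_boolcard muln2 flip_card ?(eqP (Hw _)) //.
by rewrite sum_nat_const card_ord.
Qed.

Lemma Mval_ge n (W : 'M['F_2]_n) (c : 'cV['F_2]_n) (x : 'cV['F_2]_n) : (hweight (W *m x + c) <= Mval W c)%N.
Proof. rewrite /Mval; exact: (@leq_bigmax _ (fun y => hweight (W *m y + c)) x). Qed.

Lemma card_cV_pos n : (0 < #|'cV['F_2]_n|)%N.
Proof. by apply/card_gt0P; exists 0. Qed.

Lemma lower1 n (W : 'M['F_2]_n) (c : 'cV['F_2]_n) : is_wiring W ->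
  (n <= (Mval W c).*2)%N.
Proof.
move=> Hw; have := sum_hw c Hw.
have : (\sum_(x : 'cV['F_2]_n) hweight (W *m x + c) <= \sum_(x : 'cV['F_2]_n) Mval W c)%N.
  by apply: leq_sum => x _; exact: Mval_ge.
have HN : (\sum_(x : 'cV['F_2]_n) Mval W c = #|'cV['F_2]_n| * Mval W c)%N.
  by rewrite sum_nat_const.
rewrite HN => Hle Heq.
have := card_cV_pos n.
move: Hle Heq; set S := (\sum_x _)%N; set N := #|_|; set M := Mval W c.
move=> Hle Heq HN0.
have : (n * N <= M.*2 * N)%N by rewrite -Heq -mul2n -[in X in (_ <= X)%N]mul2n -mulnA leq_mul2l /= mulnC.
by rewrite leq_pmul2r.
Qed.

Lemma sum_eq_const (T : finType) (f : T -> nat) M x0 :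
  (forall x, f x <= M)%N -> (\sum_x f x = \sum_(x : T) M)%N -> f x0 = M.
Proof.
move=> Hf; rewrite (bigD1 x0) //= [X in _ = X](bigD1 x0) //= => E.
have : (\sum_(i | i != x0) f i <= \sum_(i | i != x0) M)%N by apply: leq_sum.
have := Hf x0; lia.
Qed.

Lemma vdeg_hw n (W : 'M['F_2]_n) (j : 'I_n) :
  vdeg W j = hweight (W *m (delta_mx j (ord0 : 'I_1) : 'cV_n)).
Proof. by rewrite /vdeg /hweight; apply: eq_card => i; rewrite !inE Wdelta. Qed.

Lemma hw_add_F2 n (u v : 'cV['F_2]_n) :
  ((hweight (u + v))%:R : 'F_2) = (hweight u)%:R + (hweight v)%:R.
Proof. by rewrite !hweight_F2 -big_split; apply: eq_bigr => i _; rewrite mxE. Qed.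

Lemma lower2 n (W : 'M['F_2]_n) (c : 'cV['F_2]_n) (j : 'I_n) :
  is_wiring W -> odd (vdeg W j) -> ~~ odd n -> (n./2 < Mval W c)%N.
Proof.
move=> Hw Hodd Hn.
have L := lower1 c Hw.
rewrite ltnNge; apply/negP; rewrite geq_half_double => Hle.
have HM : (Mval W c).*2 = n by apply/eqP; rewrite eqn_leq Hle L.
have Hsum := sum_hw c Hw.
have HN : (\sum_(x : 'cV['F_2]_n) Mval W c = #|'cV['F_2]_n| * Mval W c)%N.
  by rewrite sum_nat_const.
have Hall : forall x, hweight (W *m x + c) = Mval W c.
  move=> x; apply: (sum_eq_const (f := fun x => hweight (W *m x + c))).
    by move=> y; exact: Mval_ge.
  rewrite HN; apply: double_inj; rewrite Hsum doubleMr HM mulnC //.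
have h0 := Hall 0; rewrite mulmx0 add0r in h0.
have h1 := Hall (delta_mx j ord0).
have := congr1 (fun k => (k%:R : 'F_2)) h1.
rewrite /= hw_add_F2 h0 -vdeg_hw => /eqP; rewrite -subr_eq0 addrK F2_nat_odd.
by rewrite Hodd.
Qed.

Lemma bigmin_le (I : eqType) (r : seq I) (P : pred I) (F : I -> nat) d x :
  x \in r -> P x -> (\big[minn/d]_(i <- r | P i) F i <= F x)%N.
Proof.
elim: r => //= y r IH; rewrite inE big_cons; case/orP => [/eqP <- | Hx] Px.
  by rewrite Px geq_minl.
case: (P y); last exact: IH.
by apply: leq_trans (geq_minr _ _) _; exact: IH.
Qed.

Lemma numin_eq n (P : pred 'M['F_2]_n) L W0 c0 :
  (L <= n)%N -> (forall W c, P W -> L <= Mval W c)%N -> P W0 -> (Mval W0 c0 <= L)%N ->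
  numin P = L.
Proof.
move=> HLn Hlow HW0 Hc0; rewrite /numin; apply/eqP; rewrite eqn_leq; apply/andP; split.
  apply: leq_trans (bigmin_le _ _ (mem_index_enum W0) HW0) _.
  by apply: leq_trans (bigmin_le _ _ (mem_index_enum c0) isT) _.
apply: (big_ind (fun v => L <= v)%N) => //; first by move=> a b Ha Hb; rewrite leq_min Ha Hb.
move=> W PW; apply: (big_ind (fun v => L <= v)%N) => //; first by move=> a b Ha Hb; rewrite leq_min Ha Hb.
by move=> c _; apply: Hlow.
Qed.

Definition sq h (q : nat -> nat) j := minn j./2 (h - q j).
Definition wf h (q : nat -> nat) (ext : nat -> nat -> bool) (i j : nat) : bool :=
  if (i./2 < h)%N then (sq h q j <= i./2 < sq h q j + q j)%N else ext (i - h.*2)%N j.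
Definition cf h (i : nat) : bool := (i./2 < h)%N && ~~ odd i.
Definition Wm n h q ext : 'M['F_2]_n := \matrix_(i, j) (wf h q ext i j)%:R.
Definition cv n h : 'cV['F_2]_n := \col_i (cf h i)%:R.

Lemma vdeg_Wm n h r (q : nat -> nat) (ext : nat -> nat -> bool) (j : 'I_n) : n = (h.*2 + r)%N -> (q j <= h)%N ->
  vdeg (Wm n h q ext) j = ((q j).*2 + count (ext^~ j) (iota 0 r))%N.
Proof.
move=> Hn Hq.
have -> : vdeg (Wm n h q ext) j = #|[set i : 'I_n | wf h q ext i j]|.
  by apply: eq_card => i; rewrite !inE mxE F2_natb.
rewrite (card_iota n (fun i => wf h q ext i j)).
have -> : iota 0 n = iota 0 h.*2 ++ iota h.*2 r by rewrite Hn iotaD.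
rewrite count_cat.
congr addn.
  rewrite (@eq_in_count _ _ (fun i => (sq h q j).*2 <= i < (sq h q j + q j).*2)%N).
    rewrite count_interval /sq; lia.
  move=> i; rewrite mem_iota add0n /= => Hi.
  by rewrite /wf ltn_half_double Hi geq_half_double ltn_half_double.
rewrite -[h.*2]addn0 iotaDl count_map; apply: eq_count => k /=.
by rewrite /wf ltn_half_double ltnNge leq_addr /= addKn.
Qed.

Lemma diag_pair h q ext j : (j < h.*2)%N -> (0 < q j <= h)%N -> wf h q ext j j.
Proof.
move=> Hj Hq; rewrite /wf ltn_half_double Hj /sq.
move: Hj; rewrite -ltn_half_double; set p := j./2; lia.
Qed.

Lemma half_le i : (i./2 <= i)%N.
Proof. rewrite leq_half_double; lia. Qed.

Lemma y_expr n h q ext (x : 'cV['F_2]_n) (i : 'I_n) :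
  (Wm n h q ext *m x + cv n h) i ord0 =
  \sum_(j : 'I_n) (wf h q ext i j)%:R * x j ord0 + (cf h i)%:R.
Proof. by rewrite !mxE; congr (_ + _); apply: eq_bigr => j _; rewrite mxE. Qed.

Lemma upper_pairs n h r q ext (x : 'cV['F_2]_n) : n = (h.*2 + r)%N ->
  (hweight (Wm n h q ext *m x + cv n h) <= h +
     #|[set i : 'I_n | (h <= i./2)%N && ((Wm n h q ext *m x + cv n h)%R i ord0 != 0%R)]|)%N.
Proof.
move=> Hn; set y := Wm n h q ext *m x + cv n h.
set S := [set i : 'I_n | y i ord0 != 0].
set P := [set i : 'I_n | (i./2 < h)%N].
have -> : hweight y = #|S|  by [].
rewrite -(cardsID P S).
have -> : S :\: P = [set i : 'I_n | (h <= i./2)%N && (y i ord0 != 0%R)].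
  by apply/setP => i; rewrite !inE ltnNge negbK andbC.
apply: leq_add; last exact: leqnn.
pose f (i : 'I_n) : 'I_n := Ordinal (leq_ltn_trans (half_le i) (ltn_ord i)).
have finj : {in S :&: P &, injective f}.
  move=> i1 i2; rewrite !inE => /andP [Hy1 Hp1] /andP [Hy2 Hp2] /(congr1 val) /= E.
  case Eo: (odd i1 == odd i2).
    apply: ord_inj; rewrite -[nat_of_ord i1]odd_double_half -[nat_of_ord i2]odd_double_half E.
    by rewrite (eqP Eo).
  exfalso.
  have Hrow : \sum_(j : 'I_n) (wf h q ext i1 j)%:R * x j ord0 = \sum_(j : 'I_n) (wf h q ext i2 j)%:R * x j ord0 :> 'F_2.
    by apply: eq_bigr => j _; rewrite /wf E Hp2.
  move: Hy1 Hy2; rewrite /y !y_expr Hrow /cf Hp1 Hp2 /=.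
  set a := \sum_j _.
  move: Eo; case: (odd i1); case: (odd i2) => //= _.
    rewrite addr0 !F2_neq0 => Ha; rewrite (eqP Ha).
    by rewrite F2_addxx eq_sym oner_eq0.
  rewrite addr0 !F2_neq0 => Ha1 Ha; rewrite (eqP Ha) in Ha1.
  by rewrite F2_addxx eq_sym oner_eq0 in Ha1.
rewrite -(card_in_imset finj).
apply: leq_trans (subset_leq_card (_ : _ \subset [set i : 'I_n | (i < h)%N])) _.
  apply/subsetP => z /imsetP [i]; rewrite !inE => /andP [_ Hi] ->; by [].
rewrite (card_iota n (fun i => i < h)%N).
rewrite (@eq_in_count _ _ (fun i => (0 <= i < h)%N)); last by move=> i _.
rewrite count_interval; lia.
Qed.

Lemma card_high n h r : n = (h.*2 + r)%N -> #|[set i : 'I_n | (h <= i./2)%N]| = r.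
Proof.
move=> Hn; rewrite (card_iota n (fun i => h <= i./2)%N).
rewrite (@eq_in_count _ _ (fun i => (h.*2 <= i < n)%N)).
  rewrite count_interval; lia.
by move=> i; rewrite mem_iota /= geq_half_double => ->; rewrite andbT.
Qed.

Lemma upper_small n h r q ext (x : 'cV['F_2]_n) : n = (h.*2 + r)%N ->
  (hweight (Wm n h q ext *m x + cv n h) <= h + r)%N.
Proof.
move=> Hn; apply: leq_trans (upper_pairs q ext x Hn) _.
rewrite leq_add2l -(card_high Hn); apply: subset_leq_card.
by apply/subsetP => i; rewrite !inE => /andP [].
Qed.

Lemma F2_xor (a b : bool) : ((a (+) b)%:R : 'F_2) = a%:R + b%:R.
Proof. case: a; case: b => //=; rewrite ?addr0 ?add0r //. by rewrite F2_addxx. Qed.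

Lemma upper_D n h q ext (x : 'cV['F_2]_n) : n = (h.*2 + 3)%N ->
  (forall j, ext 2%N j = ext 0%N j (+) ext 1%N j) ->
  (hweight (Wm n h q ext *m x + cv n h) <= h + 2)%N.
Proof.
move=> Hn Hext; apply: leq_trans (upper_pairs q ext x Hn) _.
rewrite leq_add2l -ltnS -(card_high Hn); apply: proper_card.
apply/properP; split; first by apply/subsetP => i; rewrite !inE => /andP [].
set y := Wm n h q ext *m x + cv n h.
have Ha : (h.*2 < n)%N by lia.
have Hb : (h.*2.+1 < n)%N by lia.
have Hd : (h.*2.+2 < n)%N by lia.
set a := Ordinal Ha; set b := Ordinal Hb; set d := Ordinal Hd.
have Hy (i : 'I_n) : (h <= i./2)%N ->
    y i ord0 = \sum_(j : 'I_n) (ext (i - h.*2)%N j)%:R * x j ord0.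
  move=> Hi; rewrite /y y_expr /cf /wf ltnNge Hi /= addr0.
  by [].
have ha : (h <= a./2)%N by rewrite geq_half_double /a /=.
have hb : (h <= b./2)%N by rewrite geq_half_double /b /=; lia.
have hd : (h <= d./2)%N by rewrite geq_half_double /d /=; lia.
have Eyd : y d ord0 = y a ord0 + y b ord0.
  rewrite !Hy // -big_split /=; apply: eq_bigr => j _.
  have E1 : (h.*2.+2 - h.*2 = 2)%N by lia.
  have E2 : (h.*2.+1 - h.*2 = 1)%N by lia.
  by rewrite /= subnn E1 E2 Hext F2_xor mulrDl.
case Ea: (y a ord0 == 0); first by exists a; rewrite !inE ?ha ?Ea.
case Eb: (y b ord0 == 0); first by exists b; rewrite !inE ?hb ?Eb.
exists d; rewrite !inE hd //= negbK Eyd.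
move: Ea Eb.
case: (F2_cases (y a ord0)) => ->; first by rewrite eqxx.
case: (F2_cases (y b ord0)) => ->; first by rewrite eqxx.
by rewrite F2_addxx eqxx.
Qed.

Lemma halfS1 n : ((n + 1)./2 = odd n + n./2)%N.
Proof. by rewrite addn1 /= uphalf_half. Qed.

Lemma construct_gen n m h r (q : nat -> nat) (ext : nat -> nat -> bool) B :
  n = (h.*2 + r)%N ->
  (forall j, j < n -> q j <= h)%N ->
  (forall j, j < n -> (q j).*2 + count (ext^~ j) (iota 0 r) = m)%N ->
  (forall j, j < h.*2 -> 0 < q j)%N ->
  (forall j, h.*2 <= j < n -> ext (j - h.*2) j)%N ->
  (forall x, hweight (Wm n h q ext *m x + cv n h) <= B)%N ->
  exists (W : 'M['F_2]_n) (c : 'cV['F_2]_n),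
    @Astar n m W /\ (forall x, hweight (W *m x + c) <= B)%N.
Proof.
move=> Hn Hq Hc Hq0 He Hb; exists (Wm n h q ext), (cv n h); split => //.
apply/andP; split.
  apply/forallP => i; rewrite mxE.
  case: (ltnP i h.*2) => Hi.
    by rewrite diag_pair // Hq0 // Hq.
  have : wf h q ext i i.
    by rewrite /wf ltn_half_double ltnNge Hi /= He // Hi ltn_ord.
  by move=> ->.
apply/forallP => j; rewrite (@vdeg_Wm n h r q ext j Hn (Hq _ (ltn_ord j))).
by rewrite Hc.
Qed.

Lemma constructA n m : (2 <= m <= n)%N -> ~~ odd n -> ~~ odd m ->
  exists (W : 'M['F_2]_n) (c : 'cV['F_2]_n),
    @Astar n m W /\ (forall x, hweight (W *m x + c) <= (n + 1)./2)%N.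
Proof.
move=> /andP[Hm Hmn] On Om.
have En := odd_double_half n; have Em := odd_double_half m.
rewrite (negbTE On) in En; rewrite (negbTE Om) in Em.
have Hh := half_leq Hmn.
have Hn : n = (n./2.*2 + 0)%N by lia.
apply: (@construct_gen n m n./2 0 (fun _ => m./2) (fun _ _ => false)) => //.
- move=> j _ /=; lia.
- by move=> j _; rewrite half_gt0.
- move=> j; lia.
- move=> x; apply: leq_trans (upper_small _ _ x Hn) _.
  by rewrite halfS1 (negbTE On) addn0.
Qed.

Lemma constructB n m : (2 <= m <= n)%N -> ~~ odd n -> odd m ->
  exists (W : 'M['F_2]_n) (c : 'cV['F_2]_n),
    @Astar n m W /\ (forall x, hweight (W *m x + c) <= n./2.+1)%N.
Proof.
move=> /andP[Hm Hmn] On Om.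
have En := odd_double_half n; have Em := odd_double_half m.
rewrite (negbTE On) in En; rewrite Om in Em.
set h := (n./2 - 1)%N.
have Hn : n = (h.*2 + 2)%N by rewrite /h; lia.
apply: (@construct_gen n m h 2 (fun _ => m./2)
          (fun k j => if k == 0%N then j == h.*2 else j != h.*2)) => //.
- move=> j _; rewrite /h; lia.
- move=> j _ /=; case: (j == h.*2) => /=; lia.
- move=> j _; rewrite half_gt0; lia.
- move=> j /andP [Hj1 Hj2].
  case E: (j - h.*2)%N => [|k] /=.
    apply/eqP; lia.
  apply/eqP; lia.
- move=> x; apply: leq_trans (upper_small _ _ x Hn) _.
  rewrite /h; lia.
Qed.

Lemma constructC n m : (2 <= m <= n)%N -> odd n -> odd m ->
  exists (W : 'M['F_2]_n) (c : 'cV['F_2]_n),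
    @Astar n m W /\ (forall x, hweight (W *m x + c) <= (n + 1)./2)%N.
Proof.
move=> /andP[Hm Hmn] On Om.
have En := odd_double_half n; have Em := odd_double_half m.
rewrite On in En; rewrite Om in Em.
have Hh := half_leq Hmn.
have Hn : n = (n./2.*2 + 1)%N by lia.
apply: (@construct_gen n m n./2 1 (fun _ => m./2) (fun _ _ => true)) => //.
- move=> j _ /=; lia.
- move=> j _; rewrite half_gt0; lia.
- move=> x; apply: leq_trans (upper_small _ _ x Hn) _.
  by rewrite halfS1 On addn1.
Qed.

Lemma constructD n m : (2 <= m <= n)%N -> odd n -> ~~ odd m ->
  exists (W : 'M['F_2]_n) (c : 'cV['F_2]_n),
    @Astar n m W /\ (forall x, hweight (W *m x + c) <= (n + 1)./2)%N.
Proof.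
move=> /andP[Hm Hmn] On Om.
have En := odd_double_half n; have Em := odd_double_half m.
rewrite On in En; rewrite (negbTE Om) in Em.
set h := (n./2 - 1)%N.
have Hn : n = (h.*2 + 3)%N by rewrite /h; lia.
pose cnd j := ((h.*2 <= j) || (4 <= m))%N.
pose T1 j := (j != h.*2.+1) && cnd j.
pose T2 j := j == h.*2.+1.
apply: (@construct_gen n m h 3 (fun j => if cnd j then m./2 - 1 else m./2)%N
   (fun k j => if k == 0%N then T1 j else if k == 1%N then T2 j else T1 j (+) T2 j)) => //.
- move=> j Hj; rewrite /cnd; case: ifP => /orP; rewrite /h; lia.
- move=> j _ /=; rewrite /T1 /T2.
  case Hc: (cnd j).
    case: (j == h.*2.+1) => /=; lia.
  have -> : (j == h.*2.+1) = false.
    apply/eqP; move: Hc; rewrite /cnd => /negbT; rewrite negb_or -!ltnNge => /andP [H1 H2].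
    lia.
  rewrite /=; lia.
- move=> j Hj; rewrite /cnd; case: ifP => /orP; lia.
- move=> j /andP [Hj1 Hj2]; rewrite /T1 /T2 /cnd Hj1 /=.
  case E: (j - h.*2)%N => [|[|k]] /=.
  + apply/eqP; lia.
  + apply/eqP; lia.
  + have -> : j = h.*2.+2 by lia.
    have -> : (h.*2.+2 == h.*2.+1) = false by apply/eqP; lia.
    by [].
- move=> x; apply: leq_trans (@upper_D n h _ _ x Hn _) _.
    by move=> j.
  rewrite halfS1 On /h; lia.
Qed.

Lemma construct n m : (2 <= m <= n)%N ->
  exists (W : 'M['F_2]_n) (c : 'cV['F_2]_n),
    @Astar n m W /\
    (forall x, hweight (W *m x + c) <= (if ~~ odd n && odd m then n./2.+1 else (n + 1)./2))%N.
Proof.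
move=> H; case On: (odd n); case Om: (odd m) => /=.
- by apply: constructC; rewrite ?On ?Om.
- by apply: constructD; rewrite ?On ?Om.
- by apply: constructB; rewrite ?On ?Om.
- by apply: constructA; rewrite ?On ?Om.
Qed.

Lemma Mval_le_bound n (W : 'M['F_2]_n) c B :
  (forall x, hweight (W *m x + c) <= B)%N -> (Mval W c <= B)%N.
Proof. by move=> H; apply/bigmax_leqP => x _; exact: H. Qed.

Lemma hw_le_n n (u : 'cV['F_2]_n) : (hweight u <= n)%N.
Proof. by rewrite /hweight; apply: leq_trans (max_card _) _; rewrite card_ord. Qed.

Lemma wdeg_le_n n (W : 'M['F_2]_n) : (wdeg W <= n)%N.
Proof.
apply/bigmax_leqP => j _; rewrite /vdeg.
by apply: leq_trans (max_card _) _; rewrite card_ord.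
Qed.

Lemma wdeg_star n m (W : 'M['F_2]_n) : @Astar n m W -> (wdeg W <= m)%N.
Proof.
by case/andP => _ /forallP H; apply/bigmax_leqP => j _; rewrite (eqP (H j)).
Qed.

Lemma nu_val n m : (0 < n)%N -> (0 < m)%N -> (n = 1%N \/ 2 <= m)%N -> nu n m = (n + 1)./2.
Proof.
move=> Hn Hm Hor.
have En := odd_double_half n.
rewrite /nu.
have Hlow : forall W c, @Aset n m W -> ((n + 1)./2 <= Mval W c)%N.
  move=> W c /andP [Hw _]; have := lower1 c Hw.
  by rewrite leq_half_double addn1.
case: (eqVneq n 1%N) => [E1 | Hn1].
  apply: (@numin_eq n (@Aset n m) _ 1%:M 0) => //.
  - rewrite halfS1; lia.
  - apply/andP; split; first by apply/forallP => i; rewrite mxE eqxx.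
    by apply: leq_trans (wdeg_le_n _) _; rewrite E1.
  - apply: Mval_le_bound => x; apply: leq_trans (hw_le_n _) _.
    by rewrite E1 halfS1.
have Hm2 : (2 <= m)%N by case: Hor => // E; rewrite E eqxx in Hn1.
have Hnm : (2 <= 2 <= n)%N by rewrite leqnn /=; lia.
have [W [c [HW Hb]]] := construct Hnm.
apply: (@numin_eq n (@Aset n m) _ W c) => //.
- rewrite halfS1; lia.
- apply/andP; split; first by case/andP: HW.
  exact: leq_trans (wdeg_star HW) Hm2.
- apply: Mval_le_bound => x; apply: leq_trans (Hb x) _.
  by rewrite /= andbF.
Qed.

Lemma nustar_val n m : (2 <= m <= n)%N ->
  nustar n m = (if ~~ odd n && odd m then n./2.+1 else (n + 1)./2).
Proof.
move=> H.
have En := odd_double_half n; have Em := odd_double_half m.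
have [W [c [HW Hb]]] := construct H.
rewrite /nustar; apply: (@numin_eq n (@Astar n m) _ W c) => //.
- case/andP: H => H1 H2.
  case On: (odd n); case Om: (odd m) => /=; rewrite ?halfS1 ?On; rewrite On in En; rewrite Om in Em; lia.
- move=> W' c' /andP [Hw /forallP Hd].
  have Hn0 : (0 < n)%N by case/andP: H => H1 H2; lia.
  case: ifP => [/andP [On Om] | _].
    apply: (@lower2 n W' c' (Ordinal Hn0) Hw) => //.
    by rewrite (eqP (Hd _)).
  by have := lower1 c' Hw; rewrite leq_half_double addn1.
- exact: Mval_le_bound.
Qed.

Theorem theorem3p2 :
  (forall n m : nat, (0 < n)%N -> (1 < m)%N ->
     (nu1 n = (n + 1)./2 /\ nu n m = (n + 1)./2) /\
     ((m <= n)%N ->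
        nustar n m = (if ~~ odd n && odd m then (nu n m).+1 else nu n m))) /\
  (forall n : nat, (1 < n)%N -> nustar n 2 = nustar1 n /\ nustar1 n = nu1 n).
Proof.
split.
  move=> n m Hn Hm.
  have Hnu : nu n m = (n + 1)./2 by apply: nu_val => //; [lia | right].
  have Hnu1 : nu1 n = (n + 1)./2.
    rewrite /nu1; apply: nu_val => //; case: (ltnP 1 n) => H; [right | left]; lia.
  split => // Hmn.
  rewrite nustar_val ?Hm ?Hmn // Hnu halfS1.
  by case: (odd n); case: (odd m).
move=> n Hn.
have Hnu1 : nu1 n = (n + 1)./2 by rewrite /nu1; apply: nu_val => //; [lia | lia | right].
have H1 : (2 <= 2 <= n)%N by rewrite leqnn.
have H2 : (2 <= n <= n)%N by rewrite Hn leqnn.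
by rewrite /nustar1 Hnu1 (nustar_val H1) (nustar_val H2) /= ?andNb ?andbF.
Qed.
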